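(* Let $G$ be a $B_2$-EPG graph given with a representation in which every vertex is a Z-vertex, and let $X$ be a clique of $G$. For rows $a,b$ let $X_{ab}$ be the set of vertices of $X$ with index exactly $\{a,b\}$. If there are two rows $a,b$ such that the projection graph of $X_{ab}$ on $a$ is not a clique, then $X$ is contained in (the vertex set of) a good graph of $G$.
   Context: A graph $G$ is a $B_k$-EPG graph if each vertex $u$ can be assigned a path $P_u$ in the planar orthogonal grid with at most $k$ bends such that $uv\in E(G)$ iff $P_u$ and $P_v$ share at least one grid edge (a representation); for $B_2$-EPG graphs one assumes w.l.o.g. every path has exactly two bends. A vertex $u$ intersects a row (column) if $P_u$ contains a grid edge of it; the index of $u$ is the set of rows it intersects. A Z-vertex intersects exactly two rows and one column. If $a$ is in the index of $u$, $P_u^a$ is the segment of row $a$ between the two points of row $a$ where $P_u$ stops or bends. Types: $\emptyset$, $\mathsf d$, $\mathsf u$. A typed interval on row $a$ is $[x\alpha, y\beta]$ with $\alpha\le\beta$ points of row $a$ and $x,y$ types; it is proper if $\alpha\neq\beta$, or $\alpha=\beta$, $x=y$ and $x\in\{\mathsf u,\mathsf d\}$. For typed intervals $t=[x\alpha,y\beta]$, $t'=[x'\alpha',y'\beta']$ on row $a$ and an endpoint $z\gamma\in\{x'\alpha',y'\beta'\}$ of $t'$, $t$ is coherent with $z\gamma$ if (i) $\gamma\in(\alpha,\beta)$ (open interval), or (ii) $z=\emptyset$ and $[\alpha,\beta]$ contains the grid edge of $[\alpha',\beta']$ incident to $\gamma$, or (iii) $z\neq\emptyset$ and $z\gamma\in\{x\alpha,y\beta\}$.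 $t$ contains $t'$ if $[\alpha',\beta']\subseteq[\alpha,\beta]$ and $t$ is coherent with both endpoints of $t'$. $t$ intersects $t'$ if $[\alpha,\beta]\cap[\alpha',\beta']$ contains a grid edge, or $t$ is coherent with an endpoint of $t'$, or $t'$ is coherent with an endpoint of $t$. The t-projection of $u$ on $a$ is $[x\alpha,y\beta]$ where $\alpha,\beta$ are the endpoints of $P_u^a$ and the type of an endpoint $\gamma$ is $\emptyset$ if $P_u$ ends at $\gamma$, $\mathsf d$ if $P_u$ bends downwards at $\gamma$, $\mathsf u$ if upwards. A vertex $u$ contains (intersects) a typed interval $t$ on $a$ if $a$ is in the index of $u$ and its t-projection on $a$ contains (intersects) $t$. The projection graph of a set $Y$ of vertices whose indices contain $a$ is the graph on $Y$ in which $u,v$ are adjacent iff their t-projections on $a$ intersect. A good graph of $G$ is an induced subgraph $H$ of one of the following forms: (I) there are two rows $a,b$ and proper typed intervals $t_a$ on $a$ and $t_b$ on $b$ such that $H$ is induced by all vertices $v$ that contain $t_a$, or contain $t_b$, or intersect both $t_a$ and $t_b$; (II) there are three rows $a,b,c$ and proper typed intervals $t_a,t_b,t_c$ on $a,b,c$ respectively such that $H$ is induced by all vertices $v$ that contain $t_a$, or contain $t_b$, or intersect $t_b$ and contain $t_c$. *)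

(* Defs.v *)
From Stdlib Require Import ZArith List.
Open Scope Z_scope.

(** * Grid and Z-shaped paths
    Grid points are (x, y) in Z * Z; row y = const, column x = const.
    y grows upwards, so "downwards" means towards smaller y. *)

(** A path with exactly two bends intersecting exactly two rows and one column
    (a Z-vertex) is horizontal-vertical-horizontal:
      (zx1, zr1) -- (zc, zr1) | (zc, zr2) -- (zx2, zr2). *)
Record zpath := ZPath { zr1 : Z; zr2 : Z; zc : Z; zx1 : Z; zx2 : Z }.

Definition is_zvertex (p : zpath) : Prop :=
  zr1 p <> zr2 p /\ zx1 p <> zc p /\ zx2 p <> zc p.

(** Grid edges: [HE y x] joins (x,y)-(x+1,y); [VE x y] joins (x,y)-(x,y+1). *)
Inductive gedge := HE (y x : Z) | VE (x y : Z).

Definition seg_has (lo hi k : Z) : Prop := Z.min lo hi <= k /\ k + 1 <= Z.max lo hi.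

Definition path_has_edge (p : zpath) (e : gedge) : Prop :=
  match e with
  | HE y x => (y = zr1 p /\ seg_has (zx1 p) (zc p) x) \/
              (y = zr2 p /\ seg_has (zx2 p) (zc p) x)
  | VE x y => x = zc p /\ seg_has (zr1 p) (zr2 p) y
  end.

Definition adj {V : Type} (P : V -> zpath) (u v : V) : Prop :=
  u <> v /\ exists e, path_has_edge (P u) e /\ path_has_edge (P v) e.

Definition is_clique {V : Type} (P : V -> zpath) (X : V -> Prop) : Prop :=
  forall u v, X u -> X v -> u <> v -> adj P u v.

Definition in_index (p : zpath) (a : Z) : Prop := a = zr1 p \/ a = zr2 p.

Definition X_ab {V : Type} (P : V -> zpath) (X : V -> Prop) (a b : Z) (v : V) : Prop :=
  X v /\ ((zr1 (P v) = a /\ zr2 (P v) = b) \/ (zr1 (P v) = b /\ zr2 (P v) = a)).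

Inductive ttype := TEmpty | TDown | TUp.

(** [TI x al y be] is the typed interval [x al, y be] (with al <= be). *)
Record tint := TI { tlt : ttype; tlp : Z; trt : ttype; trp : Z }.

Definition tint_wf (t : tint) : Prop := tlp t <= trp t.

Definition proper (t : tint) : Prop :=
  tint_wf t /\
  (tlp t <> trp t \/
   (tlp t = trp t /\ tlt t = trt t /\ (tlt t = TUp \/ tlt t = TDown))).

Definition coh_left (t t' : tint) : Prop :=
  (tlp t < tlp t' < trp t) \/
  (tlt t' = TEmpty /\ tlp t' < trp t' /\ tlp t <= tlp t' /\ tlp t' + 1 <= trp t) \/
  (tlt t' <> TEmpty /\ ((tlt t' = tlt t /\ tlp t' = tlp t) \/
                        (tlt t' = trt t /\ tlp t' = trp t))).

Definition coh_right (t t' : tint) : Prop :=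
  (tlp t < trp t' < trp t) \/
  (trt t' = TEmpty /\ tlp t' < trp t' /\ tlp t <= trp t' - 1 /\ trp t' <= trp t) \/
  (trt t' <> TEmpty /\ ((trt t' = tlt t /\ trp t' = tlp t) \/
                        (trt t' = trt t /\ trp t' = trp t))).

Definition tcontains (t t' : tint) : Prop :=
  tlp t <= tlp t' /\ trp t' <= trp t /\ coh_left t t' /\ coh_right t t'.

Definition tintersects (t t' : tint) : Prop :=
  Z.max (tlp t) (tlp t') + 1 <= Z.min (trp t) (trp t') \/
  coh_left t t' \/ coh_right t t' \/ coh_left t' t \/ coh_right t' t.

(** type at the bend point of row-segment on row [a] when the path continues
    to row [a'] *)
Definition bend_type (a a' : Z) : ttype := if Z.ltb a' a then TDown else TUp.

(** typed interval of the horizontal segment from the free end [x] to the bend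
    [c] on row [a], the path turning towards row [a'] at [c] *)
Definition seg_tint (x c a a' : Z) : tint :=
  if Z.leb x c then TI TEmpty x (bend_type a a') c
  else TI (bend_type a a') c TEmpty x.

(** t-projection of a path on row a (meaningful when a is in its index) *)
Definition tproj (p : zpath) (a : Z) : tint :=
  if Z.eqb a (zr1 p) then seg_tint (zx1 p) (zc p) (zr1 p) (zr2 p)
  else seg_tint (zx2 p) (zc p) (zr2 p) (zr1 p).

Definition v_contains (p : zpath) (a : Z) (t : tint) : Prop :=
  in_index p a /\ tcontains (tproj p a) t.

Definition v_intersects (p : zpath) (a : Z) (t : tint) : Prop :=
  in_index p a /\ tintersects (tproj p a) t.

Definition proj_graph_clique {V : Type} (P : V -> zpath) (Y : V -> Prop) (a : Z) : Prop :=
  forall u v, Y u -> Y v -> u <> v -> tintersects (tproj (P u) a) (tproj (P v) a).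

Definition good_I {V : Type} (P : V -> zpath) (a b : Z) (ta tb : tint) (v : V) : Prop :=
  v_contains (P v) a ta \/ v_contains (P v) b tb \/
  (v_intersects (P v) a ta /\ v_intersects (P v) b tb).

Definition good_II {V : Type} (P : V -> zpath) (a b c : Z) (ta tb tc : tint) (v : V) : Prop :=
  v_contains (P v) a ta \/ v_contains (P v) b tb \/
  (v_intersects (P v) b tb /\ v_contains (P v) c tc).

Definition in_good_graph {V : Type} (P : V -> zpath) (X : V -> Prop) : Prop :=
  (exists a b ta tb, proper ta /\ proper tb /\
     forall v, X v -> good_I P a b ta tb v) \/
  (exists a b c ta tb tc, proper ta /\ proper tb /\ proper tc /\
     forall v, X v -> good_II P a b c ta tb tc v).

(* Main.v *)
Require Import Defs.
From Stdlib Require Import ZArith List Lia Classical.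
Open Scope Z_scope.

Definition me (t : tint) (k : Z) : Prop := tlp t <= k /\ k + 1 <= trp t.
Definition ml (t : tint) (p : Z) (x : ttype) : Prop :=
  x <> TEmpty /\ (tlp t < p < trp t \/ (p = tlp t /\ x = tlt t) \/ (p = trp t /\ x = trt t)).
Definition meets (t t' : tint) : Prop :=
  (exists k, me t k /\ me t' k) \/ (exists p x, ml t p x /\ ml t' p x).
Definition tincl (t t' : tint) : Prop :=
  (forall k, me t' k -> me t k) /\ (forall p x, ml t' p x -> ml t p x).

Ltac hsplit := repeat match goal with
 | H : _ /\ _ |- _ => destruct H
 | H : _ \/ _ |- _ => destruct H
 | H : exists _, _ |- _ => destruct H
 end.
Ltac tsubst := repeat match goal with
 | H : ?x = ?y |- _ => (is_var x; subst x) || (is_var y; subst y)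
 end.
Ltac solve_ml := unfold ml; simpl; split; [congruence|];
  first [ left; lia | right; left; split; [lia|congruence] | right; right; split; [lia|congruence] ].
Ltac solve_me := unfold me; simpl; lia.
Ltac wit_e k := left; exists k; split; solve_me.
Ltac wit_l p x := right; exists p, x; split; solve_ml.

Lemma meets_sym t t' : meets t t' -> meets t' t.
Proof. unfold meets; intros [[k [A B]]|[p [x [A B]]]]; [left|right]; eauto. Qed.

Lemma inter_meets t t' : proper t -> proper t' -> tintersects t t' -> meets t t'.
Proof.
  destruct t as [a b c d], t' as [e f g h].
  unfold proper, tint_wf, tintersects, coh_left, coh_right; simpl.
  intros P1 P2 I. hsplit;
  first [ congruence
        | wit_e (Z.max b f) | wit_e b | wit_e f | wit_e (d-1) | wit_e (h-1)
        | wit_l b a | wit_l d c | wit_l f e | wit_l h g ].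
Qed.

Lemma meets_inter t t' : meets t t' -> tintersects t t'.
Proof.
  destruct t as [a b c d], t' as [e f g h].
  unfold meets, me, ml, tintersects, coh_left, coh_right; simpl.
  intros I. hsplit;
  first [ congruence | left; lia
        | right; left; left; lia
        | right; right; left; left; lia
        | right; right; right; left; left; lia
        | right; right; right; right; left; lia
        | right; left; right; right; split; [congruence|]; first [left; split; [congruence|lia] | right; split; [congruence|lia]]
        | right; right; left; right; right; split; [congruence|]; first [left; split; [congruence|lia] | right; split; [congruence|lia]]
        | right; right; right; left; right; right; split; [congruence|]; first [left; split; [congruence|lia] | right; split; [congruence|lia]]
        | right; right; right; right; right; right; split; [congruence|]; first [left; split; [congruence|lia] | right; split; [congruence|lia]]
        | idtac ].
Qed.

Lemma incl_cont t t' : tint_wf t -> proper t' -> tincl t t' -> tcontains t t'.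
Proof.
  destruct t as [a b c d], t' as [e f g h].
  unfold proper, tint_wf, tincl, tcontains, coh_left, coh_right; simpl.
  intros Wt P [HE HL].
  destruct (Z.eq_dec f h) as [Efh|Nfh].
  - destruct P as [Pw [P|[_ [Eeg Pe]]]]; [congruence|].
    assert (Hne : e <> TEmpty) by (destruct Pe; congruence).
    assert (L1 := HL f e). unfold ml in L1; simpl in L1.
    specialize (L1 (conj Hne (or_intror (or_introl (conj eq_refl eq_refl))))).
    destruct L1 as [_ L1]. hsplit; subst; repeat split; try lia;
    first [ left; lia | right; right; split; [congruence|]; first [left; split; congruence | right; split; congruence] ].
  - destruct P as [Pw _].
    assert (E1 := HE f). assert (E2 := HE (h-1)). unfold me in E1, E2; simpl in E1, E2.
    specialize (E1 ltac:(lia)). specialize (E2 ltac:(lia)).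
    split; [lia|split; [lia|split]].
    + destruct e eqn:Ee.
      * right; left; repeat split; lia.
      * assert (L1 : ml (TI a b c d) f TDown) by (apply HL; unfold ml; simpl; split; [discriminate| right; left; split; reflexivity]).
        unfold ml in L1; simpl in L1. destruct L1 as [_ L1]. hsplit; first [left; lia | right; right; split; [congruence|]; first [left; split; congruence | right; split; congruence]].
      * assert (L1 : ml (TI a b c d) f TUp) by (apply HL; unfold ml; simpl; split; [discriminate| right; left; split; reflexivity]).
        unfold ml in L1; simpl in L1. destruct L1 as [_ L1]. hsplit; first [left; lia | right; right; split; [congruence|]; first [left; split; congruence | right; split; congruence]].
    + destruct g eqn:Eg.
      * right; left; repeat split; lia.
      * assert (L1 : ml (TI a b c d) h TDown) by (apply HL; unfold ml; simpl; split; [discriminate| right; right; split; reflexivity]).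
        unfold ml in L1; simpl in L1. destruct L1 as [_ L1]. hsplit; first [left; lia | right; right; split; [congruence|]; first [left; split; congruence | right; split; congruence]].
      * assert (L1 : ml (TI a b c d) h TUp) by (apply HL; unfold ml; simpl; split; [discriminate| right; right; split; reflexivity]).
        unfold ml in L1; simpl in L1. destruct L1 as [_ L1]. hsplit; first [left; lia | right; right; split; [congruence|]; first [left; split; congruence | right; split; congruence]].
Qed.

Definition ttype_eqb (x y : ttype) : bool :=
  match x, y with
  | TEmpty, TEmpty | TDown, TDown | TUp, TUp => true
  | _, _ => false end.
Lemma ttype_eqb_spec x y : reflect (x = y) (ttype_eqb x y).
Proof. destruct x, y; simpl; constructor; congruence. Qed.

Definition meet2 (t1 t2 : tint) : tint :=
  TI (if Z.eqb (tlp t1) (tlp t2) then (if ttype_eqb (tlt t1) (tlt t2) then tlt t1 else TEmpty)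
      else if Z.ltb (tlp t2) (tlp t1) then tlt t1 else tlt t2)
     (Z.max (tlp t1) (tlp t2))
     (if Z.eqb (trp t1) (trp t2) then (if ttype_eqb (trt t1) (trt t2) then trt t1 else TEmpty)
      else if Z.ltb (trp t1) (trp t2) then trt t1 else trt t2)
     (Z.min (trp t1) (trp t2)).

Lemma meet2_me m t k : me (meet2 m t) k <-> me m k /\ me t k.
Proof. destruct m, t; unfold me, meet2; simpl; lia. Qed.

Ltac dmeet := repeat match goal with
  | |- context [Z.eqb ?a ?b] => destruct (Z.eqb_spec a b)
  | |- context [Z.ltb ?a ?b] => destruct (Z.ltb_spec a b)
  | |- context [ttype_eqb ?a ?b] => destruct (ttype_eqb_spec a b)
  end.

Lemma meet2_ml m t p x : proper m -> proper t -> meets m t ->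
  (ml (meet2 m t) p x <-> ml m p x /\ ml t p x).
Proof.
  destruct m as [a b c d], t as [e f g h].
  unfold proper, tint_wf, meets, me, ml, meet2; simpl.
  intros P1 P2 M. dmeet; split; intro HH; hsplit;
  try (exfalso; lia); try congruence;
  try (split; [congruence|]; first [ left; lia | right; left; split; [lia|congruence] | right; right; split; [lia|congruence] ]);
  try (split; split; [congruence| |congruence|]; first [ left; lia | right; left; split; [lia|congruence] | right; right; split; [lia|congruence] ]).
Qed.

Lemma nonE x : x <> TEmpty -> x = TUp \/ x = TDown.
Proof. destruct x; auto; congruence. Qed.

Lemma meet2_proper m t : proper m -> proper t -> meets m t -> proper (meet2 m t).
Proof.
  destruct m as [a b c d], t as [e f g h].
  unfold proper, tint_wf, meets, me, ml, meet2; simpl.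
  intros P1 P2 M. dmeet; hsplit; split; try lia.
  all: first [ left; lia | exfalso; lia
             | right; split; [lia|split;[congruence|]]; apply nonE; congruence ].
Qed.

Lemma meets_bounds X Y : proper X -> proper Y -> meets X Y -> tlp X <= trp Y /\ tlp Y <= trp X.
Proof.
  destruct X as [a b c d], Y as [e f g h]; unfold proper, tint_wf, meets, me, ml; simpl.
  intros P1 P2 M; hsplit; lia.
Qed.

Lemma meet_at_point X Y : proper X -> proper Y -> meets X Y -> trp X = tlp Y ->
  trt X = tlt Y /\ tlt Y <> TEmpty.
Proof.
  destruct X as [a b c d], Y as [e f g h]; unfold proper, tint_wf, meets, me, ml; simpl.
  intros P1 P2 M E; hsplit; first [exfalso; lia | split; congruence].
Qed.

Lemma proper_point X : proper X -> tlp X = trp X -> tlt X = trt X /\ tlt X <> TEmpty.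
Proof.
  destruct X as [a b c d]; unfold proper, tint_wf; simpl. intros P E; hsplit; try lia; split; congruence.
Qed.

Ltac spec_eq H := match type of H with ?u = ?v -> _ =>
  let EE := fresh "EE" in destruct (Z.eq_dec u v) as [EE|EE]; [specialize (H EE)|clear H] end.

Lemma helly3 s m t : proper s -> proper m -> proper t -> meets s m -> meets s t -> meets m t ->
  (exists k, me s k /\ me m k /\ me t k) \/ (exists p x, ml s p x /\ ml m p x /\ ml t p x).
Proof.
  intros Ps Pm Pt Msm Mst Mmt.
  pose proof (meets_bounds _ _ Ps Pm Msm). pose proof (meets_bounds _ _ Ps Pt Mst).
  pose proof (meets_bounds _ _ Pm Pt Mmt).
  assert (Ws := proj1 Ps); assert (Wm := proj1 Pm); assert (Wt := proj1 Pt).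
  unfold tint_wf in Ws, Wm, Wt.
  set (L := Z.max (tlp s) (Z.max (tlp m) (tlp t))).
  set (R := Z.min (trp s) (Z.min (trp m) (trp t))).
  destruct (Z_lt_le_dec L R) as [LR|LR].
  { left; exists L; unfold me, L, R in *; lia. }
  assert (Msm' := meets_sym _ _ Msm). assert (Mst' := meets_sym _ _ Mst). assert (Mmt' := meets_sym _ _ Mmt).
  pose proof (meet_at_point _ _ Ps Pm Msm) as A1.
  pose proof (meet_at_point _ _ Pm Ps Msm') as A2.
  pose proof (meet_at_point _ _ Ps Pt Mst) as A3.
  pose proof (meet_at_point _ _ Pt Ps Mst') as A4.
  pose proof (meet_at_point _ _ Pm Pt Mmt) as A5.
  pose proof (meet_at_point _ _ Pt Pm Mmt') as A6.
  pose proof (proper_point _ Ps) as B1. pose proof (proper_point _ Pm) as B2. pose proof (proper_point _ Pt) as B3.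
  clear Msm Mst Mmt Msm' Mst' Mmt'.
  destruct s as [a b c d], m as [e f g h], t as [i j k l]; simpl in *.
  unfold L, R in *; clear L R.
  right; exists (Z.max b (Z.max f j)).
  unfold ml; simpl.
  clear Ps Pm Pt.
  spec_eq A1; spec_eq A2; spec_eq A3; spec_eq A4; spec_eq A5; spec_eq A6; spec_eq B1; spec_eq B2; spec_eq B3.
  all: hsplit.
  all: try (exfalso; lia).
  all: first [ exists a; repeat split; first [congruence | left; lia | right; left; split; [lia|congruence] | right; right; split; [lia|congruence]]
        | exists e; repeat split; first [congruence | left; lia | right; left; split; [lia|congruence] | right; right; split; [lia|congruence]]
        | exists i; repeat split; first [congruence | left; lia | right; left; split; [lia|congruence] | right; right; split; [lia|congruence]] ].
Qed.

Definition shape (A : tint) (s : ttype) : Prop :=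
  tlp A < trp A /\ (tlt A = TEmpty \/ tlt A = s) /\ (trt A = TEmpty \/ trt A = s).

Definition key (A B : tint) : Z :=
  if Z.ltb (trp A) (tlp B) then trp A else
  match trt A with TEmpty => trp A - 1 | _ => tlp B end.

Lemma nomeet_touch A B s : s <> TEmpty -> shape A s -> shape B s -> ~ meets A B -> trp A = tlp B ->
  trt A = TEmpty \/ tlt B = TEmpty.
Proof.
  intros Hs [HA1 [HA2 HA3]] [HB1 [HB2 HB3]] N E.
  destruct HA3 as [HA3|HA3]; [now left|]. destruct HB2 as [HB2|HB2]; [now right|].
  exfalso; apply N; right; exists (trp A), s; unfold ml.
  split; (split; [auto|]); [right; right; split; auto | right; left; split; [lia | auto]].
Qed.

Lemma nomeet_sep A B : ~ meets A B -> trp A <= tlp B \/ trp B <= tlp A \/ trp A <= tlp A \/ trp B <= tlp B.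
Proof.
  intros N. destruct (Z_le_gt_dec (trp A) (tlp B)); [now left|].
  destruct (Z_le_gt_dec (trp B) (tlp A)); [now right; left|].
  destruct (Z_le_gt_dec (trp A) (tlp A)); [now right; right; left|].
  destruct (Z_le_gt_dec (trp B) (tlp B)); [now right; right; right|].
  exfalso; apply N; left; exists (Z.max (tlp A) (tlp B)); unfold me; lia.
Qed.

Lemma cover A B W s : s <> TEmpty -> shape A s -> shape B s -> ~ meets A B -> trp A <= tlp B ->
  tint_wf W -> meets W A -> meets W B -> me W (key A B).
Proof.
  intros Hs SA SB N Hle Ww MA MB.
  assert (T : trp A = tlp B -> trt A = TEmpty \/ tlt B = TEmpty) by (intro; eapply nomeet_touch; eauto).
  destruct SA as [SA1 [SA2 SA3]], SB as [SB1 [SB2 SB3]].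
  destruct A as [a b c d], B as [e f g h], W as [i j k l].
  unfold key, tint_wf, meets, me, ml in *; simpl in *.
  destruct (Z.ltb_spec d f).
  - hsplit; lia.
  - assert (d = f) by lia. specialize (T H0).
    destruct c; hsplit; first [congruence | lia].
Qed.

Lemma pw_core A B W1 W2 s : s <> TEmpty -> shape A s -> shape B s -> ~ meets A B ->
  tint_wf W1 -> tint_wf W2 ->
  meets W1 A -> meets W1 B -> meets W2 A -> meets W2 B -> meets W1 W2.
Proof.
  intros Hs SA SB N W1w W2w M1A M1B M2A M2B.
  assert (SA' := SA); assert (SB' := SB).
  destruct SA' as [SA1 _], SB' as [SB1 _].
  destruct (nomeet_sep _ _ N) as [H|[H|[H|H]]]; try lia.
  - left; exists (key A B); split; eapply cover; eauto.
  - assert (N' : ~ meets B A) by (intro M; apply N, meets_sym, M).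
    left; exists (key B A); split; eapply cover; eauto.
Qed.

Definition xr (p : zpath) (r : Z) : Z := if Z.eqb r (zr1 p) then zx1 p else zx2 p.
Definition oth (p : zpath) (r : Z) : Z := if Z.eqb r (zr1 p) then zr2 p else zr1 p.

Lemma tp_form p r : in_index p r -> tproj p r = seg_tint (xr p r) (zc p) r (oth p r).
Proof.
  unfold in_index, tproj, xr, oth. intros H.
  destruct (Z.eqb_spec r (zr1 p)); [subst; reflexivity|].
  destruct H; [contradiction|subst; reflexivity].
Qed.

Lemma xr_ne p r : is_zvertex p -> in_index p r -> xr p r <> zc p.
Proof. unfold is_zvertex, in_index, xr; intros [Z1 [Z2 Z3]] H; destruct (Z.eqb_spec r (zr1 p)); auto. Qed.

Lemma oth_ne p r : is_zvertex p -> in_index p r -> oth p r <> r.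
Proof. unfold is_zvertex, in_index, oth; intros [Z1 [Z2 Z3]] H; destruct (Z.eqb_spec r (zr1 p)); lia. Qed.

Lemma has_oth p r y : in_index p r -> in_index p y -> y <> r -> y = oth p r.
Proof. unfold in_index, oth; intros H1 H2 H3; destruct (Z.eqb_spec r (zr1 p)); lia. Qed.

Lemma seg_shape x c a a' : x <> c -> shape (seg_tint x c a a') (bend_type a a').
Proof.
  unfold shape, seg_tint; intros H; destruct (Z.leb_spec x c); simpl; repeat split; auto; lia.
Qed.

Lemma bt_ne a a' : bend_type a a' <> TEmpty.
Proof. unfold bend_type; destruct (Z.ltb a' a); discriminate. Qed.

Lemma shape_proper A s : shape A s -> proper A.
Proof. unfold shape, proper, tint_wf; intros [? _]; split; lia. Qed.

Lemma seg_me x c a a' k : seg_has x c k -> me (seg_tint x c a a') k.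
Proof. unfold seg_has, me, seg_tint; destruct (Z.leb_spec x c); simpl; lia. Qed.

Lemma seg_leaf x c a a' : x <> c -> ml (seg_tint x c a a') c (bend_type a a').
Proof.
  unfold ml, seg_tint; intros H; split; [apply bt_ne|].
  destruct (Z.leb_spec x c); simpl; [right; right|right; left]; auto.
Qed.

Lemma he_seg p r x : is_zvertex p -> in_index p r -> path_has_edge p (HE r x) -> seg_has (xr p r) (zc p) x.
Proof.
  unfold is_zvertex, in_index, xr; simpl; intros [Z1 [Z2 Z3]] H [[E S]|[E S]];
  destruct (Z.eqb_spec r (zr1 p)); auto; lia.
Qed.

Lemma ve_side p r x y : is_zvertex p -> in_index p r -> path_has_edge p (VE x y) ->
  x = zc p /\ (oth p r < r <-> y < r).
Proof.
  unfold is_zvertex, in_index, oth, seg_has; simpl; intros [Z1 [Z2 Z3]] H [E S]; unfold seg_has in S; split; auto.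
  destruct (Z.eqb_spec r (zr1 p)); split; intro; lia.
Qed.

Lemma adj_meet p q r e : is_zvertex p -> is_zvertex q -> in_index p r -> in_index q r ->
  path_has_edge p e -> path_has_edge q e ->
  meets (tproj p r) (tproj q r) \/ (exists y, y <> r /\ in_index p y /\ in_index q y).
Proof.
  intros Zp Zq Hp Hq Ep Eq.
  rewrite (tp_form p r Hp), (tp_form q r Hq).
  destruct e as [y x | x y].
  - destruct (Z.eq_dec y r) as [->|Ny].
    + left; left; exists x; split; apply seg_me; apply he_seg; auto.
    + right; exists y; split; [auto|]. simpl in Ep, Eq. unfold in_index.
      split; [destruct Ep as [[? _]|[? _]] | destruct Eq as [[? _]|[? _]]]; auto.
  - left; right.
    destruct (ve_side p r x y Zp Hp Ep) as [E1 S1]. destruct (ve_side q r x y Zq Hq Eq) as [E2 S2].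
    assert (B : bend_type r (oth p r) = bend_type r (oth q r)).
    { unfold bend_type. destruct (Z.ltb_spec (oth p r) r), (Z.ltb_spec (oth q r) r); auto; exfalso; lia. }
    exists x, (bend_type r (oth p r)); split.
    + rewrite E1; apply seg_leaf, xr_ne; auto.
    + rewrite B, E2; apply seg_leaf, xr_ne; auto.
Qed.

Lemma he_index z y x : path_has_edge z (HE y x) -> in_index z y.
Proof. unfold in_index; simpl; intros [[? _]|[? _]]; auto. Qed.

Lemma tp_shape z r : is_zvertex z -> in_index z r -> shape (tproj z r) (bend_type r (oth z r)).
Proof. intros Z H; rewrite tp_form by auto; apply seg_shape, xr_ne; auto. Qed.

Lemma tp_proper z r : is_zvertex z -> in_index z r -> proper (tproj z r).
Proof. intros; eapply shape_proper, tp_shape; eauto. Qed.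

Lemma tp_wf z r : is_zvertex z -> in_index z r -> tint_wf (tproj z r).
Proof. intros; apply tp_proper; auto. Qed.

Lemma vert_meet p q r x y : is_zvertex p -> is_zvertex q -> in_index p r -> in_index q r ->
  path_has_edge p (VE x y) -> path_has_edge q (VE x y) -> meets (tproj p r) (tproj q r).
Proof.
  intros Zp Zq Hp Hq Ep Eq.
  destruct (adj_meet p q r (VE x y) Zp Zq Hp Hq Ep Eq) as [M|M]; auto.
  rewrite (tp_form p r Hp), (tp_form q r Hq). right.
  destruct (ve_side p r x y Zp Hp Ep) as [E1 S1]. destruct (ve_side q r x y Zq Hq Eq) as [E2 S2].
  assert (B : bend_type r (oth p r) = bend_type r (oth q r)).
  { unfold bend_type. destruct (Z.ltb_spec (oth p r) r), (Z.ltb_spec (oth q r) r); auto; exfalso; lia. }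
  exists x, (bend_type r (oth p r)); split.
  + rewrite E1; apply seg_leaf, xr_ne; auto.
  + rewrite B, E2; apply seg_leaf, xr_ne; auto.
Qed.

Definition idx2 (z : zpath) (r s : Z) : Prop := (zr1 z = r /\ zr2 z = s) \/ (zr1 z = s /\ zr2 z = r).

Lemma idx2_r z r s : idx2 z r s -> in_index z r.
Proof. unfold idx2, in_index; intros [[]|[]]; auto. Qed.
Lemma idx2_s z r s : idx2 z r s -> in_index z s.
Proof. unfold idx2, in_index; intros [[]|[]]; auto. Qed.
Lemma idx2_only z r s y : idx2 z r s -> in_index z y -> y = r \/ y = s.
Proof. unfold idx2, in_index; intros [[]|[]] [|]; subst; auto. Qed.
Lemma idx2_oth z r s : is_zvertex z -> idx2 z r s -> oth z r = s.
Proof. unfold idx2, oth, is_zvertex; intros [Z1 _] [[]|[]]; subst; destruct (Z.eqb_spec (zr1 z) (zr1 z)); try lia;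
  destruct (Z.eqb_spec (zr2 z) (zr1 z)); lia. Qed.
Lemma idx2_ne z r s : is_zvertex z -> idx2 z r s -> r <> s.
Proof. unfold idx2, is_zvertex; intros [Z1 _] [[]|[]]; subst; auto. Qed.
Lemma two_idx z r s : is_zvertex z -> in_index z r -> in_index z s -> r <> s -> idx2 z r s.
Proof. unfold idx2, in_index, is_zvertex; intros [Z1 _] [|] [|] N; subst; auto; lia. Qed.
Lemma three_rows z a b c : in_index z a -> in_index z b -> in_index z c -> a <> b -> b <> c -> a <> c -> False.
Proof. unfold in_index; intros; lia. Qed.

Lemma self_inter z r : is_zvertex z -> in_index z r -> tintersects (tproj z r) (tproj z r).
Proof.
  intros. apply meets_inter. assert (S := tp_shape z r H H0). destruct S as [S _].
  left; exists (tlp (tproj z r)); unfold me; lia.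
Qed.

Definition BAD {V : Type} (P : V -> zpath) (X : V -> Prop) (r s : Z) : Prop :=
  exists p q, X p /\ X q /\ idx2 (P p) r s /\ idx2 (P q) r s /\
    ~ tintersects (tproj (P p) r) (tproj (P q) r).
Definition COV {V : Type} (P : V -> zpath) (X : V -> Prop) (r s : Z) : Prop :=
  forall w, X w -> in_index (P w) r \/ in_index (P w) s.
Definition PW {V : Type} (P : V -> zpath) (X : V -> Prop) (r s : Z) : Prop :=
  forall w1 w2, X w1 -> X w2 -> in_index (P w1) r -> ~ in_index (P w1) s ->
    in_index (P w2) r -> ~ in_index (P w2) s -> tintersects (tproj (P w1) r) (tproj (P w2) r).

Lemma clique_edge {V : Type} (P : V -> zpath) (X : V -> Prop) u v :
  is_clique P X -> X u -> X v -> u <> v -> exists e, path_has_edge (P u) e /\ path_has_edge (P v) e.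
Proof. intros HX Xu Xv N. destruct (HX u v Xu Xv N) as [_ H]; exact H. Qed.

Lemma adj_row {V : Type} (P : V -> zpath) (HZ : forall v, is_zvertex (P v)) (X : V -> Prop)
  (HX : is_clique P X) u v r : X u -> X v -> u <> v -> in_index (P u) r -> in_index (P v) r ->
  meets (tproj (P u) r) (tproj (P v) r) \/ (exists y, y <> r /\ in_index (P u) y /\ in_index (P v) y).
Proof.
  intros Xu Xv N Hu Hv. destruct (clique_edge P X u v HX Xu Xv N) as [e [E1 E2]].
  eapply adj_meet; eauto.
Qed.

Lemma bad_cov {V : Type} (P : V -> zpath) (HZ : forall v, is_zvertex (P v)) (X : V -> Prop)
  (HX : is_clique P X) r s : BAD P X r s -> COV P X r s.
Proof.
  intros [p [q [Xp [Xq [Ip [Iq N]]]]]] w Xw.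
  destruct (classic (in_index (P w) r \/ in_index (P w) s)) as [H|H]; auto. exfalso.
  assert (Nwr : ~ in_index (P w) r) by tauto. assert (Nws : ~ in_index (P w) s) by tauto.
  assert (Hrs := idx2_ne _ _ _ (HZ p) Ip).
  assert (Npw : w <> p) by (intro; subst; apply Nwr; eapply idx2_r; eauto).
  assert (Nqw : w <> q) by (intro; subst; apply Nwr; eapply idx2_r; eauto).
  destruct (clique_edge P X w p HX Xw Xp Npw) as [e1 [E1 F1]].
  destruct (clique_edge P X w q HX Xw Xq Nqw) as [e2 [E2 F2]].
  assert (Cp : zc (P w) = zc (P p)).
  { destruct e1 as [y x|x y].
    - exfalso. destruct (idx2_only _ _ _ y Ip (he_index _ _ _ F1)); subst;
      [apply Nwr|apply Nws]; eapply he_index; eauto.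
    - simpl in E1, F1. destruct E1, F1; congruence. }
  assert (Cq : zc (P w) = zc (P q)).
  { destruct e2 as [y x|x y].
    - exfalso. destruct (idx2_only _ _ _ y Iq (he_index _ _ _ F2)); subst;
      [apply Nwr|apply Nws]; eapply he_index; eauto.
    - simpl in E2, F2. destruct E2, F2; congruence. }
  apply N, meets_inter.
  apply (vert_meet _ _ r (zc (P p)) (Z.min r s)); auto; try (eapply idx2_r; eauto).
  - simpl; split; auto. unfold seg_has; unfold idx2 in Ip; destruct Ip as [[-> ->]|[-> ->]]; lia.
  - simpl; split; [congruence|]. unfold seg_has; unfold idx2 in Iq; destruct Iq as [[-> ->]|[-> ->]]; lia.
Qed.

Lemma meets_other {V : Type} (P : V -> zpath) (HZ : forall v, is_zvertex (P v)) (X : V -> Prop)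
  (HX : is_clique P X) w p r s : X w -> X p -> idx2 (P p) r s -> in_index (P w) r -> ~ in_index (P w) s ->
  meets (tproj (P w) r) (tproj (P p) r).
Proof.
  intros Xw Xp Ip Hr Hs.
  assert (N : w <> p) by (intro; subst; apply Hs; eapply idx2_s; eauto).
  destruct (adj_row P HZ X HX w p r Xw Xp N Hr (idx2_r _ _ _ Ip)) as [M|[y [Ny [Hy1 Hy2]]]]; auto.
  exfalso. destruct (idx2_only _ _ _ _ Ip Hy2); subst; tauto.
Qed.

Lemma bad_pw {V : Type} (P : V -> zpath) (HZ : forall v, is_zvertex (P v)) (X : V -> Prop)
  (HX : is_clique P X) r s : BAD P X r s -> PW P X r s.
Proof.
  intros [p [q [Xp [Xq [Ip [Iq N]]]]]] w1 w2 X1 X2 H1r H1s H2r H2s.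
  apply meets_inter.
  apply (pw_core (tproj (P p) r) (tproj (P q) r) _ _ (bend_type r s)).
  - apply bt_ne.
  - rewrite <- (idx2_oth _ _ _ (HZ p) Ip). apply tp_shape; auto. eapply idx2_r; eauto.
  - rewrite <- (idx2_oth _ _ _ (HZ q) Iq). apply tp_shape; auto. eapply idx2_r; eauto.
  - intro M; apply N, meets_inter, M.
  - apply tp_wf; auto.
  - apply tp_wf; auto.
  - eapply meets_other; eauto.
  - eapply meets_other; eauto.
  - eapply meets_other; eauto.
  - eapply meets_other; eauto.
Qed.

Fixpoint bnd {V : Type} (P : V -> zpath) (l : list V) : Z :=
  match l with
  | nil => 0
  | w :: l' => Z.abs (zx1 (P w)) + Z.abs (zx2 (P w)) + Z.abs (zc (P w)) + bnd P l'
  end.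

Lemma bnd_nonneg {V : Type} (P : V -> zpath) l : 0 <= bnd P l.
Proof. induction l; simpl; lia. Qed.

Lemma bnd_in {V : Type} (P : V -> zpath) l w : In w l ->
  Z.abs (zx1 (P w)) + Z.abs (zx2 (P w)) + Z.abs (zc (P w)) <= bnd P l.
Proof.
  induction l as [|x l IH]; simpl; [tauto|]. intros [->|H].
  - pose proof (bnd_nonneg P l); lia.
  - specialize (IH H); lia.
Qed.

Lemma huge_meets z r B : is_zvertex z -> in_index z r ->
  Z.abs (zx1 z) + Z.abs (zx2 z) + Z.abs (zc z) < B ->
  meets (tproj z r) (TI TEmpty (-B) TEmpty B).
Proof.
  intros Z H HB. left. rewrite tp_form by auto.
  assert (Hx : Z.abs (xr z r) + Z.abs (zc z) < B) by (unfold xr; destruct (Z.eqb (r) (zr1 z)); lia).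
  assert (Hne := xr_ne z r Z H).
  exists (Z.min (xr z r) (zc z)). unfold me, seg_tint.
  destruct (Z.leb_spec (xr z r) (zc z)); simpl; lia.
Qed.

Lemma incl_trans a b c : tincl a b -> tincl b c -> tincl a c.
Proof. unfold tincl; intros [A1 A2] [B1 B2]; split; auto. Qed.

Lemma helly_list {V : Type} (P : V -> zpath) (HZ : forall v, is_zvertex (P v)) (B : Z)
  (HB0 : 0 < B) (HB : forall w, Z.abs (zx1 (P w)) + Z.abs (zx2 (P w)) + Z.abs (zc (P w)) < B)
  (F : V -> Prop) r (HF : forall w, F w -> in_index (P w) r)
  (HP : forall w1 w2, F w1 -> F w2 -> tintersects (tproj (P w1) r) (tproj (P w2) r)) (l : list V) :
  exists m, proper m /\ (forall w, In w l -> F w -> tincl (tproj (P w) r) m) /\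
    (forall w, in_index (P w) r -> (forall w', In w' l -> F w' -> meets (tproj (P w) r) (tproj (P w') r)) ->
       meets (tproj (P w) r) m).
Proof.
  induction l as [|x l IH].
  - exists (TI TEmpty (-B) TEmpty B). split; [|split].
    + unfold proper, tint_wf; simpl. split; [lia|left; lia].
    + simpl; tauto.
    + intros w Hw _. apply huge_meets; auto.
  - destruct IH as [m [Pm [Im Mm]]].
    destruct (classic (F x)) as [Fx|Fx].
    + assert (Px : proper (tproj (P x) r)) by (apply tp_proper; auto).
      assert (Mx : meets m (tproj (P x) r)).
      { apply meets_sym, Mm; auto. intros w' Hw' Fw'. apply inter_meets; auto; try (apply tp_proper; auto). }
      exists (meet2 m (tproj (P x) r)). split; [|split].
      * apply meet2_proper; auto.
      * assert (I1 : tincl m (meet2 m (tproj (P x) r))).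
        { split; [intros k Hk; apply meet2_me in Hk; tauto | intros p y Hy; apply meet2_ml in Hy; tauto]. }
        assert (I2 : tincl (tproj (P x) r) (meet2 m (tproj (P x) r))).
        { split; [intros k Hk; apply meet2_me in Hk; tauto | intros p y Hy; apply meet2_ml in Hy; tauto]. }
        intros w [<-|Hw] Fw; auto. eapply incl_trans; eauto.
      * intros w Hw Hall.
        assert (M1 : meets (tproj (P w) r) m) by (apply Mm; auto; intros; apply Hall; simpl; auto).
        assert (M2 : meets (tproj (P w) r) (tproj (P x) r)) by (apply Hall; simpl; auto).
        destruct (helly3 _ _ _ (tp_proper _ _ (HZ w) Hw) Pm Px M1 M2 Mx) as [[k [K1 [K2 K3]]]|[p [y [K1 [K2 K3]]]]].
        -- left; exists k; split; auto. apply meet2_me; auto.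
        -- right; exists p, y; split; auto. apply meet2_ml; auto.
    + exists m. split; [auto|split].
      * intros w [<-|Hw] Fw; [contradiction|auto].
      * intros w Hw Hall. apply Mm; auto. intros; apply Hall; simpl; auto.
Qed.

Lemma helly_all {V : Type} (P : V -> zpath) (HZ : forall v, is_zvertex (P v))
  (Vfin : exists l : list V, forall v, In v l)
  (F : V -> Prop) r (HF : forall w, F w -> in_index (P w) r)
  (HP : forall w1 w2, F w1 -> F w2 -> tintersects (tproj (P w1) r) (tproj (P w2) r)) :
  exists m, proper m /\ (forall w, F w -> tcontains (tproj (P w) r) m) /\
    (forall w, in_index (P w) r -> (forall w', F w' -> tintersects (tproj (P w) r) (tproj (P w') r)) ->
       tintersects (tproj (P w) r) m).
Proof.
  destruct Vfin as [l Hl].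
  destruct (helly_list P HZ (bnd P l + 1) ltac:(pose proof (bnd_nonneg P l); lia)
    ltac:(intro w; pose proof (bnd_in P l w (Hl w)); lia) F r HF HP l) as [m [Pm [Im Mm]]].
  exists m; split; [auto|split].
  - intros w Fw. apply incl_cont; [apply tp_wf; auto | auto | apply Im; auto].
  - intros w Hw Hall. apply meets_inter, Mm; auto. intros w' _ Fw'.
    apply inter_meets; try apply tp_proper; auto.
Qed.

Lemma principle {V : Type} (P : V -> zpath) (HZ : forall v, is_zvertex (P v))
  (Vfin : exists l : list V, forall v, In v l) (X : V -> Prop) (HX : is_clique P X) r s :
  r <> s -> COV P X r s -> PW P X r s -> PW P X s r -> in_good_graph P X.
Proof.
  intros Nrs C Pr Ps.
  destruct (helly_all P HZ Vfin (fun w => X w /\ in_index (P w) r /\ ~ in_index (P w) s) r)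
    as [mr [Pmr [Cr Mr]]]; [tauto| intros w1 w2 H1 H2; apply Pr; tauto |].
  destruct (helly_all P HZ Vfin (fun w => X w /\ in_index (P w) s /\ ~ in_index (P w) r) s)
    as [ms [Pms [Cs Ms]]]; [tauto| intros w1 w2 H1 H2; apply Ps; tauto |].
  left. exists r, s, mr, ms. split; [auto|split; [auto|]].
  intros w Xw. unfold good_I, v_contains, v_intersects.
  destruct (classic (in_index (P w) s)) as [Hs|Hs]; destruct (classic (in_index (P w) r)) as [Hr|Hr].
  - right; right. split.
    + split; [exact Hr|]. apply Mr; auto. intros w' [Xw' [Hw'r Hw's]].
      assert (N : w <> w') by congruence.
      destruct (adj_row P HZ X HX w w' r Xw Xw' N Hr Hw'r) as [M|[y [Ny [Hy1 Hy2]]]]; [apply meets_inter; auto|].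
      exfalso. assert (y = s) by (destruct (idx2_only _ _ _ _ (two_idx _ _ _ (HZ w) Hr Hs Nrs) Hy1); tauto).
      subst; tauto.
    + split; [exact Hs|]. apply Ms; auto. intros w' [Xw' [Hw's Hw'r]].
      assert (N : w <> w') by congruence.
      destruct (adj_row P HZ X HX w w' s Xw Xw' N Hs Hw's) as [M|[y [Ny [Hy1 Hy2]]]]; [apply meets_inter; auto|].
      exfalso. assert (y = r) by (destruct (idx2_only _ _ _ _ (two_idx _ _ _ (HZ w) Hr Hs Nrs) Hy1); tauto).
      subst; tauto.
  - right; left; split; [exact Hs | apply Cs; auto].
  - left; split; [exact Hr | apply Cr; auto].
  - exfalso. destruct (C w Xw); tauto.
Qed.

Lemma triangle {V : Type} (P : V -> zpath) (HZ : forall v, is_zvertex (P v))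
  (Vfin : exists l : list V, forall v, In v l) (X : V -> Prop) (HX : is_clique P X) a b c :
  a <> b -> b <> c -> a <> c -> COV P X a b -> PW P X a b -> PW P X b c -> PW P X c a -> in_good_graph P X.
Proof.
  intros Nab Nbc Nac C Pa Pb Pc.
  destruct (helly_all P HZ Vfin (fun w => X w /\ in_index (P w) a /\ ~ in_index (P w) b) a)
    as [ma [Pma [Ca Ma]]]; [tauto| intros w1 w2 H1 H2; apply Pa; tauto |].
  destruct (helly_all P HZ Vfin (fun w => X w /\ in_index (P w) b /\ ~ in_index (P w) c) b)
    as [mb [Pmb [Cb Mb]]]; [tauto| intros w1 w2 H1 H2; apply Pb; tauto |].
  destruct (helly_all P HZ Vfin (fun w => X w /\ in_index (P w) c /\ ~ in_index (P w) a) c)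
    as [mc [Pmc [Cc Mc]]]; [tauto| intros w1 w2 H1 H2; apply Pc; tauto |].
  right. exists a, b, c, ma, mb, mc. split; [auto|split; [auto|split; [auto|]]].
  intros w Xw. unfold good_II, v_contains, v_intersects.
  destruct (C w Xw) as [Ha|Hb].
  - destruct (classic (in_index (P w) b)) as [Hb|Hb].
    + destruct (classic (in_index (P w) c)) as [Hc|Hc].
      * exfalso; exact (three_rows _ a b c Ha Hb Hc Nab Nbc Nac).
      * right; left; split; [exact Hb | apply Cb; auto].
    + left; split; [exact Ha | apply Ca; auto].
  - destruct (classic (in_index (P w) c)) as [Hc|Hc].
    + assert (Na : ~ in_index (P w) a) by (intro Ha; exact (three_rows _ a b c Ha Hb Hc Nab Nbc Nac)).
      right; right; split.
      * split; [exact Hb|]. apply Mb; auto. intros w' [Xw' [Hw'b Hw'c]].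
        assert (N : w <> w') by congruence.
        destruct (adj_row P HZ X HX w w' b Xw Xw' N Hb Hw'b) as [M|[y [Ny [Hy1 Hy2]]]]; [apply meets_inter; auto|].
        exfalso. assert (y = c) by (destruct (idx2_only _ _ _ _ (two_idx _ _ _ (HZ w) Hb Hc Nbc) Hy1); tauto).
        subst; tauto.
      * split; [exact Hc|]. apply Cc; auto.
    + right; left; split; [exact Hb | apply Cb; auto].
Qed.

Lemma notpw_bad {V : Type} (P : V -> zpath) (HZ : forall v, is_zvertex (P v)) (X : V -> Prop)
  (HX : is_clique P X) r s : ~ PW P X r s ->
  exists y, y <> r /\ y <> s /\ BAD P X r y.
Proof.
  intros N. unfold PW in N.
  apply not_all_ex_not in N; destruct N as [w1 N].
  apply not_all_ex_not in N; destruct N as [w2 N].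
  destruct (classic (X w1)) as [X1|X1]; [|exfalso; apply N; intros; contradiction].
  destruct (classic (X w2)) as [X2|X2]; [|exfalso; apply N; intros; contradiction].
  destruct (classic (in_index (P w1) r /\ ~ in_index (P w1) s /\ in_index (P w2) r /\ ~ in_index (P w2) s /\
     ~ tintersects (tproj (P w1) r) (tproj (P w2) r))) as [[H1r [H1s [H2r [H2s NI]]]]|K].
  2: { exfalso; apply N; intros _ _ H1r H1s H2r H2s. apply NNPP; intro NI; apply K; tauto. }
  assert (Nw : w1 <> w2) by (intro; subst; apply NI, self_inter; auto).
  destruct (adj_row P HZ X HX w1 w2 r X1 X2 Nw H1r H2r) as [M|[y [Ny [Hy1 Hy2]]]].
  - exfalso; apply NI, meets_inter, M.
  - exists y. split; [auto|split].
    + intro; subst; tauto.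
    + exists w1, w2. repeat split; auto; apply two_idx; auto.
Qed.

Theorem lemma9 (V : Type) (P : V -> zpath)
  (Vfin : exists l : list V, forall v, In v l)
  (HZ : forall v, is_zvertex (P v))
  (X : V -> Prop) (HX : is_clique P X)
  (a b : Z) (Hab : ~ proj_graph_clique P (X_ab P X a b) a) :
  in_good_graph P X.
Proof.
  assert (Bab : BAD P X a b).
  { apply NNPP; intro NB; apply Hab. intros u v Hu Hv Nuv.
    apply NNPP; intro NI; apply NB. exists u, v.
    destruct Hu as [Xu Iu], Hv as [Xv Iv]. repeat split; auto. }
  assert (Nab : a <> b).
  { destruct Bab as [p [q [_ [_ [Ip _]]]]]. eapply idx2_ne; eauto. }
  assert (Cab := bad_cov P HZ X HX a b Bab).
  assert (Pab := bad_pw P HZ X HX a b Bab).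
  destruct (classic (PW P X b a)) as [Pba|Pba].
  { apply (principle P HZ Vfin X HX a b); auto. }
  destruct (notpw_bad P HZ X HX b a Pba) as [c [Ncb [Nca Bbc]]].
  assert (Cbc := bad_cov P HZ X HX b c Bbc).
  assert (Pbc := bad_pw P HZ X HX b c Bbc).
  destruct (classic (PW P X c b)) as [Pcb|Pcb].
  { apply (principle P HZ Vfin X HX b c); auto. }
  destruct (notpw_bad P HZ X HX c b Pcb) as [d [Ndc [Ndb Bcd]]].
  assert (Eda : d = a).
  { destruct Bcd as [p [q [Xp [_ [Ip _]]]]].
    destruct (Cab p Xp) as [H|H]; destruct (idx2_only _ _ _ _ Ip H); subst; tauto. }
  subst d.
  assert (Pca := bad_pw P HZ X HX c a Bcd).
  apply (triangle P HZ Vfin X HX a b c); auto.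
Qed.
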